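(* Let $z\in\mathbb{R}^n$ satisfy $\dim\big(\Diamond_n\cap(z+\Diamond_n)\big)=n$. Then $$\big(\Diamond_n\cap(z+\Diamond_n)\big)\setminus\big(\operatorname{int}(\Diamond_n)\cup\operatorname{int}(z+\Diamond_n)\big)\subset\big(\Diamond_n\cap(z+\Diamond_n)\big)\setminus\bigcap_{i=1}^n\big(H^{(i)}\cup(z+H^{(i)})\big).$$
   Context: $\Diamond_n=\operatorname{conv}(\pm e_1,\ldots,\pm e_n)\subset\mathbb{R}^n$; $\operatorname{int}$ denotes interior; $H^{(i)}=\{x\in\mathbb{R}^n: x_i=0\}$ is the $i$-th coordinate hyperplane, the span of $e_j$, $j\ne i$. *)

(* Defs.v *)
From HB Require Import structures.
From mathcomp Require Import all_boot all_order all_algebra.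
From mathcomp Require Import all_classical all_reals all_analysis.
Set Implicit Arguments. Unset Strict Implicit. Unset Printing Implicit Defensive.
Import Order.TTheory GRing.Theory Num.Theory.
Import numFieldNormedType.Exports.
Local Open Scope classical_set_scope.
Local Open Scope ring_scope.

Definition conv_fin (R : realType) (n : nat) (I : finType) (v : I -> 'rV[R]_n)
  : set 'rV[R]_n :=
  [set x | exists w : I -> R, (forall i, 0 <= w i) /\ \sum_i w i = 1 /\
            x = \sum_i w i *: v i].

Definition stdbasis (R : realType) (n : nat) (i : 'I_n) : 'rV[R]_n :=
  \row_j (i == j)%:R.

Definition cross_vertex (R : realType) (n : nat) (p : 'I_n * bool) : 'rV[R]_n :=
  (if p.2 then 1 else -1) *: stdbasis R p.1.

Definition crosspolytope (R : realType) (n : nat) : set 'rV[R]_n :=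
  conv_fin (@cross_vertex R n).

Definition translate (R : realType) (n : nat) (z : 'rV[R]_n) (S : set 'rV[R]_n)
  : set 'rV[R]_n := [set z + y | y in S].

Definition coord_hyperplane (R : realType) (n : nat) (i : 'I_n) : set 'rV[R]_n :=
  [set x | x ord0 i = 0].

(* dim S = n : the affine hull of S is all of R^n, i.e. S contains n+1
   affinely independent points p_0,...,p_n (p_i - p_0 linearly independent). *)
Definition full_dim (R : realType) (n : nat) (S : set 'rV[R]_n) : Prop :=
  exists p : 'I_n.+1 -> 'rV[R]_n, (forall i, S (p i)) /\
    row_free (\matrix_(i < n) (p (lift ord0 i) - p ord0)).

(* Main.v *)
Require Import Defs.
From HB Require Import structures.
From mathcomp Require Import all_boot all_order all_algebra.
From mathcomp Require Import all_classical all_reals all_analysis.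
From mathcomp Require Import ring lra.
Import Order.TTheory GRing.Theory Num.Theory.
Import numFieldNormedType.Exports.
Local Open Scope classical_set_scope.
Local Open Scope ring_scope.

Section S.
Variables (R : realType) (n : nat).

Definition nd (c u : 'rV[R]_n) : R := \sum_j `|u ord0 j - c ord0 j|.

Lemma sg_lem (a b : R) : `|b| + `|b - a| = `|a| -> Num.sg a * b = `|b|.
Proof.
have [a0|a0|->] := ltrgt0P a; rewrite ?(gtr0_sg a0) ?(ltr0_sg a0) ?sgr0 ?subr0 ?normr0;
have [b0|b0|->] := ltrgt0P b; rewrite ?normr0 ?mul0r ?mul1r ?mulN1r //;
rewrite ?(gtr0_norm a0) ?(ltr0_norm a0) ?(gtr0_norm b0) ?(ltr0_norm b0);
have [c0|c0|c0] := ltrgt0P (b - a);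
rewrite ?(gtr0_norm c0) ?(ltr0_norm c0) ?c0 ?normr0; try lra.
Qed.

Lemma cv_entry (w : 'I_n * bool -> R) j :
  (\sum_p w p *: cross_vertex R p) ord0 j =
  \sum_p w p * ((if p.2 then 1 else -1) * (p.1 == j)%:R).
Proof.
rewrite summxE; apply: eq_bigr => p _.
by rewrite /cross_vertex /stdbasis !mxE.
Qed.

Lemma D_norm y : @crosspolytope R n y -> nd 0 y <= 1.
Proof.
move=> [w [w0 [w1 ->]]]; rewrite /nd.
have H j : `|(\sum_p w p *: cross_vertex R p) ord0 j - (0 : 'rV[R]_n) ord0 j|
   <= \sum_p w p * (p.1 == j)%:R.
  rewrite mxE subr0 cv_entry; apply: (le_trans (ler_norm_sum _ _ _)).
  apply: ler_sum => p _; rewrite normrM (ger0_norm (w0 p)) normrM.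
  rewrite (ger0_norm (ler0n _ _)); case: (p.2); rewrite ?normrN normr1 mul1r //.
apply: (le_trans (ler_sum _ (fun j _ => H j))).
rewrite exchange_big /= (eq_bigr w) ?w1 // => p _.
rewrite -mulr_sumr (bigD1 p.1) //= eqxx big1 ?addr0 ?mulr1 //.
by move=> j /negbTE; rewrite eq_sym => ->.
Qed.

Lemma n_pos y : @crosspolytope R n y -> (0 < n)%N.
Proof.
move=> [w [w0 [w1 _]]]; case: (posnP n) w w0 w1 => [n0|//].
subst n => w w0; rewrite big1 => [/eqP|]; first by rewrite eq_sym oner_eq0.
by move=> [[k hk] b].
Qed.

Lemma nd0 (y : 'rV[R]_n) : nd 0 y = \sum_j `|y ord0 j|.
Proof. by apply: eq_bigr => j _; rewrite mxE subr0. Qed.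

Lemma pairsum (F : 'I_n * bool -> R) :
  \sum_p F p = \sum_i (F (i, true) + F (i, false)).
Proof.
rewrite (eq_bigr (fun p => F (p.1, p.2))); last by case.
rewrite -(pair_big predT predT (fun i b => F (i, b))) /=.
by apply: eq_bigr => i _; rewrite big_bool.
Qed.

Lemma norm_D (y : 'rV[R]_n) : (0 < n)%N -> nd 0 y <= 1 -> @crosspolytope R n y.
Proof.
move=> n0; rewrite nd0 => hy.
pose i0 := Ordinal n0.
pose sl := (1 - \sum_j `|y ord0 j|) / 2.
pose w (p : 'I_n * bool) := (if p.2 then Num.max (y ord0 p.1) 0 else Num.max (- y ord0 p.1) 0)
   + (if p.1 == i0 then sl else 0).
have sl0 : 0 <= sl by rewrite /sl; lra.
have mx (a : R) : Num.max a 0 + Num.max (- a) 0 = `|a|.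
  have [a0|a0] := lerP 0 a.
    rewrite max_r ?ger0_norm //; lra.
  rewrite max_l ?ltr0_norm //; lra.
have mx2 (a : R) : Num.max a 0 - Num.max (- a) 0 = a.
  have [a0|a0] := lerP 0 a.
    rewrite max_r //; lra.
  rewrite max_l //; lra.
exists w; split; [|split].
- move=> [i b]; rewrite /w /=; apply: addr_ge0.
    by case: b; rewrite le_max lexx orbT.
  by case: (_ == _).
- rewrite pairsum /w /=.
  under eq_bigr => i _ do rewrite addrACA mx.
  rewrite big_split /= [X in _ + X](bigD1 i0) //= [X in _ + (_ + X)]big1 ?addr0; last by move=> i /negbTE ->; rewrite addr0.
  rewrite /sl; lra.
- apply/rowP => j; rewrite cv_entry pairsum /w /=.
  rewrite (bigD1 j) //= big1 ?addr0 => [|i /negbTE ij]; last first.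
    by rewrite eq_sym ij !mulr0 addr0.
  rewrite eqxx !mulr1n !mulr1 mulrN1; set c := (if _ then _ else _).
  rewrite [y 0 j](_ : _ = y ord0 j) //.
  have := mx2 (y ord0 j); lra.
Qed.
End S.
Arguments nd {R n}.
Section T.
Variables (R : realType) (n : nat).
Lemma int_ball (c y : 'rV[R]_n) : (0 < n)%N -> nd c y < 1 ->
  interior [set u | nd c u <= 1] y.
Proof.
move=> n0 hy; rewrite /interior; apply/nbhs_ballP.
have npos : 0 < n%:R :> R by rewrite ltr0n.
exists ((1 - nd c y) / n%:R); first by apply: divr_gt0 => //; lra.
move=> u /= [_ H].
set e := (1 - nd c y) / n%:R.
have H2 j : `|y ord0 j - u ord0 j| <= e.
  by have := H ord0 j; rewrite -ball_normE /ball_ /= => /ltW.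
have -> : 1 = nd c y + e * n%:R.
  rewrite /e -mulrA mulVf ?mulr1; [lra | by rewrite gt_eqF].
rewrite /nd; apply: (le_trans (ler_sum _ (fun j _ => ler_distD (y ord0 j) _ _))).
rewrite big_split /= addrC lerD2l.
have H3 j : `|u ord0 j - y ord0 j| <= e by rewrite distrC.
apply: (le_trans (ler_sum _ (fun j _ => H3 j))).
by rewrite sumr_const card_ord mulr_natr.
Qed.

Lemma nd_shift (z u : 'rV[R]_n) : nd 0 (u - z) = nd z u.
Proof. by apply: eq_bigr => j _; rewrite !mxE subr0. Qed.

Lemma transl_nd (z x : 'rV[R]_n) : translate z (@crosspolytope R n) x -> nd z x <= 1.
Proof. by move=> [y Dy <-]; rewrite -nd_shift addrC addKr; apply: D_norm. Qed.

Lemma transl_sub (z : 'rV[R]_n) : (0 < n)%N ->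
  [set u | nd z u <= 1] `<=` translate z (@crosspolytope R n).
Proof.
move=> n0 u /= hu; exists (u - z); last by rewrite addrC subrK.
by apply: norm_D => //; rewrite nd_shift.
Qed.

Lemma D_sub : (0 < n)%N -> [set u | nd 0 u <= 1] `<=` @crosspolytope R n.
Proof. by move=> n0 u /= hu; apply: norm_D. Qed.
End T.
Arguments n_pos {R n y}. Arguments D_norm {R n y}. Arguments norm_D {R n}. Arguments int_ball {R n c y}.
Arguments transl_nd {R n z x}. Arguments transl_sub {R n}. Arguments D_sub {R n}. Arguments cv_entry {R n}.

Theorem lemma6p3 (R : realType) (n : nat) (z : 'rV[R]_n) :
  full_dim (@crosspolytope R n `&` translate z (@crosspolytope R n)) ->
  (@crosspolytope R n `&` translate z (@crosspolytope R n)) `\`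
    (interior (@crosspolytope R n) `|` interior (translate z (@crosspolytope R n)))
  `<=`
  (@crosspolytope R n `&` translate z (@crosspolytope R n)) `\`
    \bigcap_(i in [set: 'I_n])
      (@coord_hyperplane R n i `|` translate z (@coord_hyperplane R n i)).
Proof.
move=> [p [Hp Hfree]] x [[Dx Tx] Hnot]; split; first by [].
move=> Hcap.
have n0 := n_pos Dx.
have s1 : nd 0 x = 1.
  have [lt|ge] := ltrP (nd 0 x) 1; last by apply/eqP; rewrite eq_le ge D_norm.
  by exfalso; apply: Hnot; left; apply: filterS (int_ball n0 lt); apply: D_sub.
have t1 : nd z x = 1.
  have [lt|ge] := ltrP (nd z x) 1; last by apply/eqP; rewrite eq_le ge transl_nd.
  by exfalso; apply: Hnot; right; apply: filterS (int_ball n0 lt); apply: transl_sub.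
have Hc j : x ord0 j = 0 \/ x ord0 j = z ord0 j.
  have [h|[y hy e]] := Hcap j I; first by left.
  by right; rewrite -e mxE hy addr0.
have hz : nd 0 z = 2.
  rewrite -[2]/(1 + 1 : R) -{1}s1 -{1}t1 /nd -big_split /=.
  apply: eq_bigr => j _; rewrite !mxE !subr0.
  by case: (Hc j) => ->; rewrite ?subrr ?normr0 ?add0r ?addr0 // ?sub0r ?normrN.
pose f (u : 'rV[R]_n) := \sum_j Num.sg (z ord0 j) * u ord0 j.
have hf u : @crosspolytope R n u -> translate z (@crosspolytope R n) u -> f u = 1.
  move=> Du Tu; have a1 := D_norm Du; have b1 := transl_nd Tu.
  rewrite nd0 in a1; rewrite nd0 in hz.
  have tri j : 0 <= `|u ord0 j| + `|u ord0 j - z ord0 j| - `|z ord0 j|.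
    rewrite subr_ge0 (distrC (u ord0 j)) addrC.
    by have := ler_distD (u ord0 j) (z ord0 j) 0; rewrite !subr0.
  have hs : \sum_j (`|u ord0 j| + `|u ord0 j - z ord0 j| - `|z ord0 j|)
     = \sum_j `|u ord0 j| + nd z u - 2 by rewrite -hz /nd sumrB big_split.
  have sum0 : 0 <= \sum_j `|u ord0 j| + nd z u - 2 by rewrite -hs; apply: sumr_ge0 => j _.
  have S0 : \sum_j (`|u ord0 j| + `|u ord0 j - z ord0 j| - `|z ord0 j|) = 0 by rewrite hs; lra.
  have e0 := psumr_eq0P (fun j _ => tri j) S0.
  have a2 : \sum_j `|u ord0 j| = 1 by lra.
  rewrite -a2 /f; apply: eq_bigr => j _.
  apply: sg_lem.
  have := e0 j isT; lra.
pose M : 'M[R]_n := \matrix_(i < n) (p (lift ord0 i) - p ord0).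
pose sv : 'cV[R]_n := \col_j Num.sg (z ord0 j).
have Ms : M *m sv = 0.
  apply/matrixP => i k; rewrite !mxE.
  have -> : \sum_j M i j * sv j k = f (p (lift ord0 i)) - f (p ord0).
    rewrite /f -sumrB; apply: eq_bigr => j _; rewrite !mxE; ring.
  by have [h1 h2] := Hp (lift ord0 i); have [h3 h4] := Hp ord0;
    rewrite (hf _ h1 h2) (hf _ h3 h4) subrr.
have sv0 : sv = 0.
  rewrite row_free_unit in Hfree.
  by rewrite -(mulKmx Hfree sv) Ms mulmx0.
have : nd 0 z = 0.
  apply: big1 => j _; rewrite mxE subr0.
  have := congr1 (fun m : 'cV[R]_n => m j ord0) sv0; rewrite !mxE => /eqP.
  by rewrite sgr_eq0 => /eqP ->; rewrite normr0.
lra.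
Qed.
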